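(* Let $\Gamma\subset\operatorname{SU}(2)$ be the binary tetrahedral, binary octahedral, or binary icosahedral group, let $\mathsf 2=\mathbb C^2|_\Gamma$ be its standard representation and $\mathsf 3=\operatorname{S}^2(\mathbb C^2)|_\Gamma$. For an irreducible complex representation $\mathsf i$ of $\Gamma$ and a representation $\mathsf j$ put $P_{\mathsf i,\mathsf j}(t)=\sum_{n\ge0}\dim\operatorname{Hom}_\Gamma\bigl(\mathsf i,\operatorname{S}^n(\mathsf j)\bigr)t^n$. Then $$P_{\mathsf i,\mathsf 3}(t)=\begin{cases}\dfrac{P_{\mathsf i,\mathsf 2}(t^{1/2})}{1-t^2}&\text{if }\mathsf i\text{ is not spinorial},\\[2mm] 0&\text{if }\mathsf i\text{ is spinorial.}\end{cases}$$
   Context: An irreducible representation $\mathsf i$ of $\Gamma$ is called spinorial if the nontrivial central element $-I\in\Gamma$ acts on it by $-1$. For non-spinorial $\mathsf i$, $P_{\mathsf i,\mathsf 2}(t)$ involves only even powers of $t$, so $P_{\mathsf i,\mathsf 2}(t^{1/2})$ is a power series in $t$. *)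

(* Defs.v *)
From HB Require Import structures.
From mathcomp Require Import all_boot all_order all_algebra all_fingroup all_solvable all_field all_character.
From mathcomp Require Import mpoly.
Set Implicit Arguments. Unset Strict Implicit. Unset Printing Implicit Defensive.
Import Order.TTheory GRing.Theory Num.Theory.
Local Open Scope ring_scope.

(* Monomials of total degree exactly k in m variables: basis of S^k(C^m). *)
Definition Mon (m k : nat) := {x : 'X_{1..m < k.+1} | mdeg x == k}.

Definition mon_of (m k : nat) (a : 'I_#|{: Mon m k}|) : 'X_{1..m} :=
  val (val (enum_val a)).

Definition linsubst (m : nat) (A : 'M[algC]_m) : m.-tuple {mpoly algC[m]} :=
  [tuple \sum_(i < m) A i j *: 'X_i | j < m].

(* Matrix of S^k(A) on the monomial basis of degree-k polynomials. *)
Definition symmat (m k : nat) (A : 'M[algC]_m) : 'M[algC]_#|{: Mon m k}| :=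
  \matrix_(a, b) (('X_[mon_of b] \mPo linsubst A) @_ (mon_of a)).

(* dim Hom_G(chi, V) for a representation V of G with character psi,
   via the character inner product '[psi, chi]_G. *)
Definition homdim (gT : finGroupType) (G : {group gT}) (chi : 'CF(G))
  (psi : gT -> algC) : algC :=
  #|G|%:R^-1 * \sum_(g in G) psi g * (chi g)^*.

(* Elements of G mapped to +-I by rho (the preimage of the center of SU(2)). *)
Definition pmI (gT : finGroupType) (G : {group gT})
  (rho : mx_representation algC G 2) : {set gT} :=
  [set g in G | (rho g == 1%:M) || (rho g == - 1%:M)].

Definition into_SU2 (gT : finGroupType) (G : {group gT})
  (rho : mx_representation algC G 2) : Prop :=
  mx_faithful rho /\
  forall g, g \in G -> (map_mx (fun x : algC => x^*) (rho g))^T *m rho g = 1%:M /\ \det (rho g) = 1.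

(* Binary tetrahedral / octahedral / icosahedral: the image in SO(3)=SU(2)/{+-I}
   is the tetrahedral (A4), octahedral (S4), icosahedral (A5) rotation group. *)
Definition binary_polyhedral (gT : finGroupType) (G : {group gT})
  (rho : mx_representation algC G 2) : Prop :=
  into_SU2 rho /\
  [\/ (G / pmI rho)%g \isog ('Alt_('I_4))%g,
      (G / pmI rho)%g \isog ('Sym_('I_4))%g |
      (G / pmI rho)%g \isog ('Alt_('I_5))%g].

Definition spinorial (gT : finGroupType) (G : {group gT})
  (rho : mx_representation algC G 2) (i : Iirr G) : Prop :=
  exists2 z, z \in G & rho z = - 1%:M /\ 'Chi_i z = - 1%:M.

(* Main.v *)
Require Import Defs.
From HB Require Import structures.
From mathcomp Require Import all_boot all_order all_algebra all_fingroup all_solvable all_field all_character.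
From mathcomp Require Import mpoly ssrcomplements zify ring.
Set Implicit Arguments. Unset Strict Implicit. Unset Printing Implicit Defensive.
Import Order.TTheory GRing.Theory Num.Theory.
Local Open Scope ring_scope.

Lemma sumMon m k (F : 'X_{1..m} -> algC) :
  \sum_(c < #|{: Mon m k}|) F (mon_of c) =
  \sum_(y : 'X_{1..m < k.+1} | mdeg y == k) F y.
Proof.
rewrite /mon_of -(big_enum_val (fun x : Mon m k => F (val (val x)))) /=.
rewrite (reindex_omap (val : Mon m k -> _) insub); last first.
  by move=> i /= Pi; rewrite insubT.
apply: eq_bigl => -[i iA] /=. by rewrite insubT ?iA /= eqxx.
Qed.

Lemma linsubstE m (A : 'M[algC]_m) j :
  tnth (linsubst A) j = \sum_(i < m) A i j *: 'X_i.
Proof. by rewrite tnth_mktuple. Qed.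

Lemma comp_linsubst m (A B : 'M[algC]_m) p :
  (p \mPo linsubst B) \mPo linsubst A = p \mPo linsubst (A *m B).
Proof.
rewrite (mpolyE p) (raddf_sum (comp_mpoly (linsubst B))) !(raddf_sum (comp_mpoly (linsubst _))) /=; apply: eq_bigr => mm _.
rewrite !comp_mpolyZ; congr (_ *: _); rewrite !comp_mpolyX rmorph_prod.
apply: eq_bigr => i _; rewrite rmorphXn /=; congr (_ ^+ _).
rewrite !linsubstE raddf_sum /=.
under eq_bigr do rewrite comp_mpolyZ comp_mpolyXU -(tnth_nth 0) linsubstE scaler_sumr.
rewrite exchange_big /=; apply: eq_bigr => r _.
rewrite mxE scaler_suml; apply: eq_bigr => l _.
by rewrite scalerA mulrC.
Qed.

Lemma linsubstX_homog m (A : 'M[algC]_m) (b : 'X_{1..m}) :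
  ('X_[b] \mPo linsubst A) \is (mdeg b).-homog.
Proof.
rewrite comp_mpolyX mdegE.
elim/big_rec2: _ => [|i q d _ Hp]; first exact: dhomog1.
rewrite -[X in (X + d)%N]mul1n; apply: dhomogM => //.
apply: dhomogMn; rewrite linsubstE; apply: rpred_sum => l _.
by apply: rpredZ; rewrite dhomogX; apply/eqP; apply: mdeg1.
Qed.

Lemma homog_expand m k (q : {mpoly algC[m]}) : q \is k.-homog ->
  q = \sum_(y : 'X_{1..m < k.+1} | mdeg y == k) q@_y *: 'X_[y].
Proof.
move=> Hq.
have Hs : (msize q <= k.+1)%N.
  rewrite mmeasureE; apply/bigop.bigmax_leqP_seq => mm Hmm _.
  by rewrite (dhomog_mf Hq Hmm).
rewrite [LHS](mpolywE Hs) (bigID (fun y : 'X_{1..m < k.+1} => mdeg y == k)) /=.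
rewrite [X in _ + X]big1 ?addr0 // => y Hy.
by rewrite (dhomog_nemf_coeff Hq Hy) scale0r.
Qed.

Lemma mon_deg m k (a : 'I_#|{: Mon m k}|) : mdeg (mon_of a) = k.
Proof. by rewrite /mon_of; apply/eqP; apply: (valP (enum_val a)). Qed.

Lemma symmat_mul m k (A B : 'M[algC]_m) :
  symmat k (A *m B) = symmat k A *m symmat k B.
Proof.
apply/matrixP => a b; rewrite !mxE -comp_linsubst.
have Hq := linsubstX_homog B (mon_of b); rewrite mon_deg in Hq.
rewrite [X in (X \mPo _)](homog_expand Hq).
rewrite (raddf_sum (comp_mpoly (linsubst A))) /= (raddf_sum (mcoeff _)) /=.
under [RHS]eq_bigr do rewrite !mxE.
rewrite (@sumMon m k (fun y => ('X_[y] \mPo linsubst A)@_(mon_of a) *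
   ('X_[mon_of b] \mPo linsubst B)@_y)).
apply: eq_bigr => y _; by rewrite comp_mpolyZ mcoeffZ mulrC.
Qed.

Lemma mon_of_inj m k : injective (@mon_of m k).
Proof. by move=> a b H; apply: enum_val_inj; apply: val_inj; apply: val_inj. Qed.

Lemma linsubst_diag m (d : 'rV[algC]_m) j :
  tnth (linsubst (diag_mx d)) j = d 0 j *: 'X_j.
Proof.
rewrite linsubstE (bigD1 j) //= big1 ?addr0 => [|i Hij]; rewrite mxE ?eqxx //.
by rewrite (negbTE Hij) mulr0n scale0r.
Qed.

Lemma X_prod m (b : 'X_{1..m}) :
  \prod_(i < m) 'X_i ^+ (b i) = 'X_[b] :> {mpoly algC[m]}.
Proof.
by rewrite -[RHS]comp_mpoly_id comp_mpolyX; apply: eq_bigr => i _; rewrite tnth_mktuple.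
Qed.

Lemma symmat_diag m k (d : 'rV[algC]_m) :
  symmat k (diag_mx d) = diag_mx (\row_a \prod_(i < m) d 0 i ^+ (mon_of a i)).
Proof.
apply/matrixP => a b; rewrite !mxE comp_mpolyX.
under eq_bigr do rewrite linsubst_diag exprZn.
rewrite scaler_prod X_prod mcoeffZ mcoeffX.
have [->|Hab] := eqVneq a b; first by rewrite eqxx mulr1.
by rewrite (inj_eq (@mon_of_inj m k)) eq_sym (negbTE Hab) mulr0.
Qed.

Lemma symmat_scalar m k (c : algC) :
  symmat k (c%:M : 'M_m) = (c ^+ k)%:M.
Proof.
rewrite -diag_const_mx symmat_diag -diag_const_mx; congr diag_mx.
apply/rowP => a; rewrite !mxE.
under eq_bigr do rewrite mxE.
by rewrite prodrXr -mdegE mon_deg.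
Qed.

Lemma symmat1 m k : symmat k (1%:M : 'M_m) = 1%:M.
Proof. by rewrite symmat_scalar expr1n. Qed.

Lemma symmat_opp m k (A : 'M[algC]_m) : symmat k (- A) = (-1) ^+ k *: symmat k A.
Proof.
by rewrite -[- A]scaleN1r -[-1 *: A]mul_scalar_mx symmat_mul symmat_scalar mul_scalar_mx.
Qed.

Lemma symmat_conj_tr m k (Q Q' A : 'M[algC]_m) : Q' *m Q = 1%:M ->
  \tr (symmat k (Q *m A *m Q')) = \tr (symmat k A).
Proof.
by move=> HQ; rewrite symmat_mul mxtrace_mulC -symmat_mul mulmxA HQ mul1mx.
Qed.

Lemma symmat_diag_tr m k (d : 'rV[algC]_m) :
  \tr (symmat k (diag_mx d)) = \sum_(a < #|{: Mon m k}|) \prod_(i < m) d 0 i ^+ (mon_of a i).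
Proof. by rewrite symmat_diag mxtrace_diag; apply: eq_bigr => a _; rewrite mxE. Qed.

Lemma sum_bmult_seq m k (s : seq 'X_{1..m}) (F : 'X_{1..m} -> algC) :
  uniq s -> (forall y, (mdeg y == k) = (y \in s)) ->
  \sum_(y : 'X_{1..m < k.+1} | mdeg y == k) F y = \sum_(x <- s) F x.
Proof.
move=> Us Hs; rewrite (big_mksub ('X_{1..m < k.+1}) Us) => [|x].
  by apply: eq_bigl => y; rewrite Hs.
by rewrite -Hs => /eqP ->.
Qed.

Definition mk2 (p q : nat) : 'X_{1..2} :=
  [multinom (if i == 0 :> nat then p else q) | i < 2].

Lemma mdeg2 (y : 'X_{1..2}) : mdeg y = (y ord0 + y ord_max)%N.
Proof. by rewrite mdegE big_ord_recr big_ord_recr big_ord0 /= add0n; congr (y _ + _)%N; apply: val_inj. Qed.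

Lemma sum2 k (F : 'X_{1..2} -> algC) :
  \sum_(y : 'X_{1..2 < k.+1} | mdeg y == k) F y =
  \sum_(p < k.+1) F (mk2 p (k - p)).
Proof.
rewrite (@sum_bmult_seq 2 k [seq mk2 p (k - p) | p <- iota 0 k.+1]).
- rewrite big_map -(big_mkord xpredT (fun p => F (mk2 p (k - p)))).
  by rewrite /index_iota subn0.
- rewrite map_inj_in_uniq ?iota_uniq // => p p' _ _ /(congr1 (fun y : 'X_{1..2} => y ord0)).
  by rewrite !mnmE.
- move=> y; apply/eqP/mapP => [Hy|[p Hp ->]].
  + exists (y ord0); first by rewrite mem_iota add0n ltnS -Hy mdeg2 leq_addr.
    apply/mnmP => i; rewrite mnmE; case: i => [[|[|//]] Hi] /=.
    * by congr (y _); apply: val_inj.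
    * rewrite -Hy mdeg2 addKn; congr (y _); exact: val_inj.
  + rewrite mdeg2 !mnmE /=; rewrite mem_iota add0n ltnS in Hp.
    by rewrite subnKC.
Qed.

Definition mk3 M (i0 i1 : 'I_M) (p q r : nat) : 'X_{1..M} :=
  [multinom (if i == i0 then p else if i == i1 then q else r) | i < M].

Lemma cover3 (i0 i1 i2 : 'I_3) : i0 != i1 -> i0 != i2 -> i1 != i2 ->
  forall i, [|| i == i0, i == i1 | i == i2].
Proof.
by case: i0 => [[|[|[|//]]] ?]; case: i1 => [[|[|[|//]]] ?];
   case: i2 => [[|[|[|//]]] ?] => //= _ _ _ [[|[|[|//]]] ?].
Qed.

Lemma sum3 M n (i0 i1 i2 : 'I_M) (F : 'X_{1..M} -> algC) :
  M = 3 -> i0 != i1 -> i0 != i2 -> i1 != i2 ->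
  \sum_(y : 'X_{1..M < n.+1} | mdeg y == n) F y =
  \sum_(k < n.+1) \sum_(p < k.+1) F (mk3 i0 i1 p (k - p) (n - k)).
Proof.
move=> HM H01 H02 H12.
have cov : forall i, [|| i == i0, i == i1 | i == i2].
  by subst M; apply: cover3.
have mdeg3 : forall y : 'X_{1..M}, mdeg y = (y i0 + y i1 + y i2)%N.
  move=> y; rewrite mdegE (bigD1 i0) //= (bigD1 i1) /=; last by rewrite eq_sym.
  rewrite addnA.
  congr (_ + _)%N; apply: big_pred1 => i /=.
  have := cov i; have [->|Hi0] /= := eqVneq i i0.
    by move=> _; rewrite (negbTE H02).
  have [->|Hi1] /= := eqVneq i i1; first by move=> _; rewrite (negbTE H12).
  by move=> ->.
have ev0 p q r : mk3 i0 i1 p q r i0 = p by rewrite mnmE eqxx.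
have ev1 p q r : mk3 i0 i1 p q r i1 = q by rewrite mnmE eq_sym (negbTE H01) eqxx.
have ev2 p q r : mk3 i0 i1 p q r i2 = r.
  by rewrite mnmE eq_sym (negbTE H02) eq_sym (negbTE H12).
rewrite (@sum_bmult_seq M n [seq mk3 i0 i1 p (k - p) (n - k)
            | k <- iota 0 n.+1, p <- iota 0 k.+1]).
- rewrite big_allpairs_dep /=.
  rewrite -(big_mkord xpredT (fun k => \sum_(p < k.+1) F (mk3 i0 i1 p (k - p) (n - k)))).
  rewrite /index_iota subn0; apply: eq_bigr => k _.
  rewrite -(big_mkord xpredT (fun p => F (mk3 i0 i1 p (k - p) (n - k)))).
  by rewrite /index_iota subn0.
- apply: allpairs_uniq_dep => [|k _|]; rewrite ?iota_uniq //.
  move=> u v /allpairsPdep[k [p [Hk Hp ->]]] /allpairsPdep[k' [p' [Hk' Hp' ->]]] /= E.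
  rewrite mem_iota add0n ltnS in Hk; rewrite mem_iota add0n ltnS in Hk'.
  have := congr1 (fun y : 'X_{1..M} => y i2) E; rewrite /= !ev2 => E2.
  have Ekk : k = k'.
    by lia.
  subst k'; have := congr1 (fun y : 'X_{1..M} => y i0) E; rewrite /= !ev0 => ->.
  by [].
- move=> y; apply/eqP/allpairsPdep => [Hy|[k [p [Hk Hp ->]]]].
  + exists (y i0 + y i1)%N, (y i0); split.
    * by rewrite mem_iota add0n ltnS -Hy mdeg3 leq_addr.
    * by rewrite mem_iota add0n ltnS leq_addr.
    * apply/mnmP => i; rewrite mnmE addKn.
      have := cov i; case: eqVneq => [->|Hi0] //=.
      case: eqVneq => [->|Hi1] //= /eqP ->.
      by rewrite -Hy mdeg3 addKn.
  + rewrite mdeg3 ev0 ev1 ev2; rewrite mem_iota add0n ltnS in Hk.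
    rewrite mem_iota add0n ltnS in Hp.
    by rewrite subnKC // subnKC.
Qed.

Definition hh (x y : algC) (m : nat) := \sum_(p < m.+1) x ^+ p * y ^+ (m - p).

Lemma hh0 x y : hh x y 0 = 1.
Proof. by rewrite /hh big_ord1 subnn !expr0 mulr1. Qed.

Lemma hhS x y m : hh x y m.+1 = y * hh x y m + x ^+ m.+1.
Proof.
rewrite /hh big_ord_recr subnn expr0 mulr1; congr (_ + _).
rewrite mulr_sumr; apply: eq_bigr => i _.
rewrite subSn; first by rewrite exprS mulrCA.
by case: i.
Qed.

Lemma hh2 x y k : x * y = 1 ->
  hh x y (2 * k).+2 = hh (x ^+ 2) (y ^+ 2) k.+1 + hh (x ^+ 2) (y ^+ 2) k.
Proof.
move=> Hxy; elim: k => [|k IH].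
  rewrite !hhS !hh0; apply/eqP; rewrite -subr_eq0.
  have -> : y * (y * 1 + x ^+ 1) + x ^+ 2 - ((y ^+ 2 * 1 + (x ^+ 2) ^+ 1) + 1)
     = x * y - 1 by ring.
  by rewrite Hxy subrr.
have -> : (2 * k.+1).+2 = ((2 * k).+2).+2 by lia.
rewrite hhS hhS IH (hhS _ _ k.+1) (hhS _ _ k).
set X := x ^+ (2 * k).+2.
have E1 : x ^+ (2 * k).+3 = x * X by rewrite exprS.
have E2 : x ^+ (2 * k).+4 = x ^+ 2 * X by rewrite /X -exprD add2n.
have E3 : (x ^+ 2) ^+ k.+2 = x ^+ 2 * X by rewrite -exprM /X -exprD; congr (_ ^+ _); lia.
have E4 : (x ^+ 2) ^+ k.+1 = X by rewrite -exprM /X; congr (_ ^+ _); lia.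
rewrite E1 E2 E3 E4; apply/eqP; rewrite -subr_eq0.
set H0 := hh _ _ k.
have -> : y * (y * ((y ^+ 2 * H0 + X) + H0) + x * X) + x ^+ 2 * X -
   (y ^+ 2 * (y ^+ 2 * H0 + X) + x ^+ 2 * X + (y ^+ 2 * H0 + X)) = X * (x * y - 1) by ring.
by rewrite Hxy subrr mulr0.
Qed.

Lemma ident x y n : x * y = 1 ->
  \sum_(0 <= k < n.+1) hh (x ^+ 2) (y ^+ 2) k =
  \sum_(0 <= j < n./2.+1) hh x y (2 * (n - 2 * j)).
Proof.
move=> Hxy.
suff H : forall n, (\sum_(0 <= k < n.+1) hh (x ^+ 2) (y ^+ 2) k =
  \sum_(0 <= j < n./2.+1) hh x y (2 * (n - 2 * j))) /\
  (\sum_(0 <= k < n.+2) hh (x ^+ 2) (y ^+ 2) k =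
  \sum_(0 <= j < n.+1./2.+1) hh x y (2 * (n.+1 - 2 * j))) by case: (H n).
elim=> [|m [IH1 IH2]].
  split; first by rewrite !big_nat1 !hh0.
  rewrite big_nat_recr // big_nat1 big_nat1 hh0.
  have -> : (2 * (1 - 2 * 0))%N = (2 * 0).+2 by [].
  by rewrite (hh2 0 Hxy) hh0 addrC.
split; first exact: IH2.
rewrite [LHS]big_nat_recr // [in LHS]big_nat_recr // IH1.
have -> : m.+2./2.+1 = (m./2.+1).+1 by [].
rewrite [RHS]big_nat_recl //.
have -> : (2 * (m.+2 - 2 * 0))%N = (2 * m.+1).+2 by lia.
rewrite (hh2 _ Hxy).
have -> : \sum_(0 <= i < m./2.+1) hh x y (2 * (m.+2 - 2 * i.+1)) =
   \sum_(0 <= j < m./2.+1) hh x y (2 * (m - 2 * j)).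
  by apply: eq_bigr => j _; congr (hh x y _); lia.
by rewrite [in RHS]addrC [in RHS](addrC (hh _ _ m.+2)) [in RHS]addrA.
Qed.

Lemma cov3M M (i0 i1 i2 : 'I_M) : M = 3 -> i0 != i1 -> i0 != i2 -> i1 != i2 ->
  forall i, [|| i == i0, i == i1 | i == i2].
Proof. by move=> HM; subst M; apply: cover3. Qed.

Lemma prod3 M (i0 i1 i2 : 'I_M) (e : 'I_M -> algC) p q r :
  M = 3 -> i0 != i1 -> i0 != i2 -> i1 != i2 ->
  \prod_(l < M) e l ^+ (mk3 i0 i1 p q r l) = e i0 ^+ p * e i1 ^+ q * e i2 ^+ r.
Proof.
move=> HM H01 H02 H12; have cov := cov3M HM H01 H02 H12.
rewrite (bigD1 i0) // (bigD1 i1); last by rewrite eq_sym H01.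
rewrite (big_pred1 i2); last first.
  move=> i /=; have := cov i; have [->|Hi0] /= := eqVneq i i0.
    by move=> _; rewrite (negbTE H02).
  have [->|Hi1] /= := eqVneq i i1; first by move=> _; rewrite (negbTE H12).
  by move=> ->.
rewrite !mnmE eqxx (eq_sym i1 i0) (negbTE H01) eqxx.
rewrite (eq_sym i2 i0) (negbTE H02) (eq_sym i2 i1) (negbTE H12).
exact: mulrA.
Qed.

Lemma mon_surj m k (u : 'X_{1..m}) : mdeg u = k ->
  exists a : 'I_#|{: Mon m k}|, mon_of a = u.
Proof.
move=> H; have bu : (mdeg u < k.+1)%N by rewrite H.
have Hx : mdeg (BMultinom bu) == k by apply/eqP.
pose x : Mon m k := exist _ (BMultinom bu) Hx.
by exists (enum_rank x); rewrite /mon_of enum_rankK.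
Qed.

Lemma card_Mon22 : #|{: Mon 2 2}| = 3.
Proof.
have E := @sumMon 2 2 (fun _ => 1).
rewrite (@sum2 2 (fun _ => 1)) !sumr_const !card_ord in E.
by move/eqP: E; rewrite eqr_nat => /eqP.
Qed.

Lemma tr_S_diag2 (d : 'rV[algC]_2) k :
  \tr (symmat k (diag_mx d)) = hh (d 0 0) (d 0 1) k.
Proof.
rewrite symmat_diag_tr (@sumMon 2 k (fun y => \prod_(i < 2) d 0 i ^+ y i)).
rewrite (@sum2 k (fun y => \prod_(i < 2) d 0 i ^+ y i)).
apply: eq_bigr => p _; rewrite big_ord_recr big_ord1 !mnmE /=.
have -> : widen_ord (leqnSn 1) ord0 = 0 :> 'I_2 by apply: val_inj.
by have -> : ord_max = 1 :> 'I_2 by apply: val_inj.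
Qed.

Lemma tr_S2S_diag (d : 'rV[algC]_2) n : d 0 0 * d 0 1 = 1 ->
  \tr (symmat n (symmat 2 (diag_mx d))) =
  \sum_(0 <= k < n.+1) hh (d 0 0 ^+ 2) (d 0 1 ^+ 2) k.
Proof.
move=> Hd.
rewrite symmat_diag symmat_diag_tr.
set e := \row_a _.
rewrite (@sumMon #|{: Mon 2 2}| n (fun y => \prod_(l < #|{: Mon 2 2}|) e 0 l ^+ y l)).
have [i0 H0] : exists a : 'I_#|{: Mon 2 2}|, mon_of a = mk2 2 0.
  by apply: mon_surj; rewrite mdeg2 !mnmE.
have [i1 H1] : exists a : 'I_#|{: Mon 2 2}|, mon_of a = mk2 0 2.
  by apply: mon_surj; rewrite mdeg2 !mnmE.
have [i2 H2] : exists a : 'I_#|{: Mon 2 2}|, mon_of a = mk2 1 1.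
  by apply: mon_surj; rewrite mdeg2 !mnmE.
have D : forall (a b : 'I_#|{: Mon 2 2}|) p q p' q', mon_of a = mk2 p q ->
    mon_of b = mk2 p' q' -> p != p' -> a != b.
  move=> a b p q p' q' Ha Hb Hp; apply/eqP => E; move: Ha Hb; rewrite E => ->.
  move/(congr1 (fun y : 'X_{1..2} => y ord0)); rewrite !mnmE /= => Epp.
  by rewrite Epp eqxx in Hp.
have D01 := D _ _ _ _ _ _ H0 H1 isT.
have D02 := D _ _ _ _ _ _ H0 H2 isT.
have D12 := D _ _ _ _ _ _ H1 H2 isT.
rewrite (sum3 n (fun y => \prod_(l < #|{: Mon 2 2}|) e 0 l ^+ y l) card_Mon22 D01 D02 D12).
have ev : forall a p q, mon_of a = mk2 p q -> e 0 a = d 0 0 ^+ p * d 0 1 ^+ q.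
  move=> a p q Ha; rewrite /e mxE Ha big_ord_recr big_ord1 !mnmE /=.
  have -> : widen_ord (leqnSn 1) ord0 = 0 :> 'I_2 by apply: val_inj.
  by have -> : ord_max = 1 :> 'I_2 by apply: val_inj.
rewrite [RHS]big_mkord.
apply: eq_bigr => k _; rewrite /hh; apply: eq_bigr => p _.
rewrite (prod3 (i2 := i2) _ _ _ _ card_Mon22 D01 D02 D12) (ev _ _ _ H0) (ev _ _ _ H1) (ev _ _ _ H2).
rewrite !expr0 !mulr1 !mul1r !expr1 Hd expr1n mulr1.
by rewrite -!exprM mulnC [(2 * _)%N]mulnC.
Qed.

Lemma tr_identity (M : 'M[algC]_2) (K : nat) n : (0 < K)%N -> M ^+ K = 1 ->
  \det M = 1 ->
  \tr (symmat n (symmat 2 M)) =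
  \sum_(0 <= j < n./2.+1) \tr (symmat (2 * (n - 2 * j)) M).
Proof.
move=> HK HMK Hdet.
have [z Hz] := C_prim_root_exists HK.
have diagM : diagonalizable M.
  apply/diagonalizableP; exists [seq z ^+ i | i <- iota 0 K].
    rewrite map_inj_in_uniq ?iota_uniq // => i j; rewrite !mem_iota !add0n.
    move=> /andP[_ Hi] /andP[_ Hj] /eqP; rewrite (eq_prim_root_expr Hz).
    by rewrite !modn_small // => /eqP.
  have -> : \prod_(x <- [seq z ^+ i | i <- iota 0 K]) ('X - x%:P) = 'X^K - 1.
    by rewrite big_map -(factor_Xn_sub_1 Hz) /index_iota subn0.
  apply: mxminpoly_min; rewrite rmorphB rmorphXn rmorph1 /= horner_mx_X HMK.
  by rewrite subrr.
have [P Punit /similar_diagPex [d /(similarRL Punit) Hd]] := diagM.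
have HQ : P *m invmx P = 1%:M := mulmxV Punit.
have EM : M = invmx P *m diag_mx d *m P.
  by rewrite Hd !mulmxA mulVmx // mul1mx -mulmxA mulVmx // mulmx1.
have Hd1 : d 0 0 * d 0 1 = 1.
  move: Hdet; rewrite EM !det_mulmx det_inv det_diag mulrC mulrA mulrV.
    rewrite mul1r big_ord_recr big_ord1.
    have -> : widen_ord (leqnSn 1) ord0 = 0 :> 'I_2 by apply: val_inj.
    by have -> : ord_max = 1 :> 'I_2 by apply: val_inj.
  by rewrite -unitmxE.
rewrite EM.
have -> : symmat 2 (invmx P *m diag_mx d *m P) =
  symmat 2 (invmx P) *m symmat 2 (diag_mx d) *m symmat 2 P by rewrite !symmat_mul.
rewrite symmat_conj_tr; last by rewrite -symmat_mul HQ symmat1.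
rewrite (tr_S2S_diag _ Hd1) (ident _ Hd1).
apply: eq_bigr => j _.
by rewrite (symmat_conj_tr _ _ HQ) tr_S_diag2.
Qed.

Lemma diag_fin (M : 'M[algC]_2) (K : nat) : (0 < K)%N -> M ^+ K = 1 ->
  exists P, exists d : 'rV_2, [/\ P \in unitmx, P *m invmx P = 1%:M &
     M = invmx P *m diag_mx d *m P].
Proof.
move=> HK HMK.
have [z Hz] := C_prim_root_exists HK.
have diagM : diagonalizable M.
  apply/diagonalizableP; exists [seq z ^+ i | i <- iota 0 K].
    rewrite map_inj_in_uniq ?iota_uniq // => i j; rewrite !mem_iota !add0n.
    move=> /andP[_ Hi] /andP[_ Hj] /eqP; rewrite (eq_prim_root_expr Hz).
    by rewrite !modn_small // => /eqP.
  have -> : \prod_(x <- [seq z ^+ i | i <- iota 0 K]) ('X - x%:P) = 'X^K - 1.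
    by rewrite big_map -(factor_Xn_sub_1 Hz) /index_iota subn0.
  apply: mxminpoly_min; rewrite rmorphB rmorphXn rmorph1 /= horner_mx_X HMK.
  by rewrite subrr.
have [P Punit /similar_diagPex [d /(similarRL Punit) Hd]] := diagM.
exists P, d; split => //; first exact: mulmxV.
by rewrite Hd !mulmxA mulVmx // mul1mx -mulmxA mulVmx // mulmx1.
Qed.

Lemma mx2_neg (M : 'M[algC]_2) (K : nat) : (0 < K)%N -> M ^+ K = 1 ->
  \det M = 1 -> M *m M = 1%:M -> M != 1%:M -> M = - 1%:M.
Proof.
move=> HK HMK Hdet HM2 HM1.
have [P [d [Punit HQ EM]]] := diag_fin HK HMK.
have Hd1 : d 0 0 * d 0 1 = 1.
  move: Hdet; rewrite EM !det_mulmx det_inv det_diag mulrC mulrA mulrV.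
    rewrite mul1r big_ord_recr big_ord1.
    have -> : widen_ord (leqnSn 1) ord0 = 0 :> 'I_2 by apply: val_inj.
    by have -> : ord_max = 1 :> 'I_2 by apply: val_inj.
  by rewrite -unitmxE.
have ED : diag_mx d = P *m M *m invmx P.
  by rewrite EM !mulmxA HQ mul1mx -mulmxA HQ mulmx1.
have HD2 : diag_mx d *m diag_mx d = 1%:M.
  rewrite ED !mulmxA -[P *m M *m invmx P *m P]mulmxA mulVmx // mulmx1.
  by rewrite -[P *m M *m M]mulmxA HM2 mulmx1 HQ.
have Hsq : forall i, d 0 i * d 0 i = 1.
  move=> i; have := congr1 (fun A : 'M[algC]_2 => A i i) HD2.
  by rewrite mulmx_diag !mxE eqxx !mulr1n.
have Hdd : d 0 1 = d 0 0.
  transitivity (d 0 0 * d 0 0 * d 0 1); first by rewrite (Hsq 0) mul1r.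
  by rewrite -mulrA Hd1 mulr1.
have HD : diag_mx d = (d 0 0)%:M.
  apply/matrixP => i j; rewrite !mxE.
  have -> : d 0 i = d 0 0.
    by case: i => [[|[|//]] Hi]; [congr (d 0 _) | rewrite -Hdd; congr (d 0 _)]; apply: val_inj.
  by [].
have EM2 : M = (d 0 0)%:M.
  by rewrite EM HD mul_mx_scalar -scalemxAl mulVmx // scalemx1.
have : (d 0 0 - 1) * (d 0 0 + 1) = 0.
  by rewrite mulrDr mulr1 mulrBl (Hsq 0) mul1r addrA subrK subrr.
move/eqP; rewrite mulf_eq0 => /orP[].
  by rewrite subr_eq0 => /eqP H1; rewrite EM2 H1 eqxx in HM1.
by rewrite addr_eq0 => /eqP Hm; rewrite EM2 Hm -scalemx1 scaleN1r.
Qed.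

Lemma rho_order gT (G : {group gT}) (rho : mx_representation algC G 2) g :
  g \in G -> rho g ^+ #[g]%g = 1.
Proof. by move=> Hg; rewrite -repr_mxX // expg_order repr_mx1. Qed.

Lemma exists_z gT (G : {group gT}) (rho : mx_representation algC G 2) :
  binary_polyhedral rho -> exists2 z, z \in G & rho z = - 1%:M.
Proof.
move=> [[Hff HU] Hiso].
have H2 : (2 %| #|G|)%N.
  apply: (@dvdn_trans #|(G / pmI rho)%g|); last exact: dvdn_morphim.
  case: Hiso => /card_isog ->.
  - have := @card_Alt ('I_4); rewrite card_ord => /(_ isT) E.
    have -> : #|('Alt_('I_4))%g| = 12 by apply/eqP; rewrite -(eqn_pmul2l (isT : 0 < 2)%N) E.
    by [].
  - by rewrite card_Sym card_ord.
  - have := @card_Alt ('I_5); rewrite card_ord => /(_ isT) E.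
    have -> : #|('Alt_('I_5))%g| = 60 by apply/eqP; rewrite -(eqn_pmul2l (isT : 0 < 2)%N) E.
    by [].
have [x Hx Hox] := Cauchy (isT : prime 2) H2.
exists x => //.
apply: (mx2_neg (K := #[x]%g)); rewrite ?order_gt0 ?rho_order //.
- by case: (HU x Hx).
- rewrite -repr_mxM //; have -> : (x * x = x ^+ 2)%g by rewrite expgS expg1.
  have -> : (x ^+ 2 = 1)%g by rewrite -Hox expg_order.
  by rewrite repr_mx1.
- apply/eqP => E; move: Hox; have -> : x = 1%g.
    by apply: (mx_faithful_inj Hff) => //; rewrite repr_mx1.
  by rewrite order1.
Qed.

Lemma scalar_pm n (A : 'M[algC]_n) c : A = c%:M -> A *m A = 1%:M ->
  A != - 1%:M -> A = 1%:M.
Proof.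
case: n A c => [|n] A c -> HA H.
  by rewrite (thinmx0 (c%:M)) (thinmx0 (- 1%:M)) eqxx in H.
have E := congr1 (fun B : 'M[algC]_n.+1 => B 0 0) HA.
rewrite /= -scalar_mxM !mxE eqxx !mulr1n in E.
have : (c - 1) * (c + 1) = 0.
  by rewrite mulrDr mulr1 mulrBl E mul1r addrA subrK subrr.
move/eqP; rewrite mulf_eq0 => /orP[].
  by rewrite subr_eq0 => /eqP ->.
by rewrite addr_eq0 => /eqP Hm; rewrite Hm raddfN /= eqxx in H.
Qed.

Lemma sum_shift gT (G : {group gT}) (F : gT -> algC) z : z \in G ->
  \sum_(g in G) F g = \sum_(g in G) F (z * g)%g.
Proof.
move=> Hz; rewrite (reindex_inj (mulgI z)) /=.
by apply: eq_bigl => g; rewrite groupMl.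
Qed.

Lemma sum_anti gT (G : {group gT}) (F : gT -> algC) z : z \in G ->
  (forall g, g \in G -> F (z * g)%g = - F g) -> \sum_(g in G) F g = 0.
Proof.
move=> Hz HF; have E := sum_shift F Hz.
have E2 : \sum_(g in G) F (z * g)%g = - \sum_(g in G) F g.
  by rewrite -sumrN; apply: eq_bigr => g Hg; exact: HF.
rewrite E2 in E.
by move/eqP: E; rewrite -addr_eq0 -mulr2n mulrn_eq0 => /eqP.
Qed.

Lemma chi_mul gT (G : {group gT}) (i : Iirr G) z g c :
  z \in G -> g \in G -> 'Chi_i z = c%:M -> 'chi_i (z * g)%g = c * 'chi_i g.
Proof.
move=> Hz Hg Hc.
by rewrite -irrRepr !cfunE groupM // Hg !mulr1n repr_mxM // Hc mul_scalar_mx mxtraceZ.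
Qed.

Lemma Chi_scalar gT (G : {group gT}) (i : Iirr G) z :
  z \in G -> (forall g, g \in G -> (z * g = g * z)%g) ->
  exists c, 'Chi_i z = c%:M.
Proof.
move=> Hz Hc; apply/is_scalar_mxP.
apply: mx_abs_irr_cent_scalar 'Chi_i _ _ _; first exact/groupC/socle_irr.
apply/centgmxP => g Hg; rewrite -!repr_mxM //.
by rewrite Hc.
Qed.

Unset Implicit Arguments.

Theorem mainTheorem7 (gT : finGroupType) (G : {group gT})
  (rho : mx_representation algC G 2) (i : Iirr G) :
  binary_polyhedral rho ->
  let a := fun n : nat => homdim 'chi_i (fun g => \tr (symmat n (rho g))) in
  let b := fun n : nat => homdim 'chi_i (fun g => \tr (symmat n (symmat 2 (rho g)))) in
  (~ spinorial rho i ->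
     (forall n, odd n -> a n = 0) /\
     (forall n, b n = \sum_(j < n./2.+1) a (2 * (n - 2 * j))%N)) /\
  (spinorial rho i -> forall n, b n = 0).
Proof.
move=> Hbp a b.
have [[Hff HU] _] := Hbp.
have central : forall z, z \in G -> rho z = - 1%:M ->
    forall g, g \in G -> (z * g = g * z)%g.
  move=> z Hz Hrz g Hg; apply: (mx_faithful_inj Hff); rewrite ?groupM //.
  by rewrite !repr_mxM // Hrz mulNmx mulmxN mul1mx mulmx1.
split.
- move=> Hns; have [z Hz Hrz] := exists_z Hbp.
  have [c Hc] := Chi_scalar i Hz (central z Hz Hrz).
  have Hc1 : 'Chi_i z = 1%:M.
    apply: (scalar_pm Hc).
      rewrite -repr_mxM //.
      have -> : (z * z = 1)%g.
        apply: (mx_faithful_inj Hff); rewrite ?groupM //.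
        by rewrite repr_mxM // Hrz mulNmx mulmxN mul1mx opprK repr_mx1.
      by rewrite repr_mx1.
    by apply/eqP => E; apply: Hns; exists z.
  have Hchi : forall g, g \in G -> 'chi_i (z * g)%g = 'chi_i g.
    by move=> g Hg; rewrite (chi_mul Hz Hg Hc1) mul1r.
  split.
  + move=> n Hodd; rewrite /a /homdim (sum_anti (z := z)) ?mulr0 // => g Hg.
    rewrite repr_mxM // Hrz mulNmx mul1mx symmat_opp mxtraceZ -signr_odd Hodd.
    by rewrite expr1 mulN1r Hchi // mulNr.
  + move=> n; rewrite /b /a /homdim.
    rewrite -mulr_sumr exchange_big /=; apply: congr1.
    apply: eq_bigr => g Hg.
    rewrite -mulr_suml (tr_identity _ (order_gt0 g) (rho_order rho Hg) (HU g Hg).2).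
    by rewrite big_mkord.
- move=> [z Hz [Hrz Hcz]] n.
  rewrite /b /homdim (sum_anti (z := z)) ?mulr0 // => g Hg.
  have Hc : 'Chi_i z = (-1)%:M by rewrite Hcz raddfN.
  rewrite repr_mxM // Hrz mulNmx mul1mx (@symmat_opp _ 2) sqrrN expr1n scale1r.
  by rewrite (chi_mul Hz Hg Hc) mulN1r rmorphN mulrN.
Qed.
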